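(* Let $P$ be a program and let $\sigma$ be a sequence of events such that the Power automaton of $P$ reaches, from its initial state $q_0$ by reading $\sigma$, a final state $q$. Then $q$ is uniquely determined by $\sigma$.
   Context: Programs. Fix a finite set $D$ of values, which also serve as addresses, with $0\in D$, and a finite set $\mathit{Reg}$ of registers taking values in $D$. Expressions are built from constants in $D$, registers, and functions over $D\cup\{\bot\}$ that return $\bot$ iff some argument is $\bot$. Commands are loads $r\leftarrow \mathrm{mem}[e]$, stores $\mathrm{mem}[e]\leftarrow e'$, assignments $r\leftarrow e$, and $\mathrm{assume}(e)$. A thread is a finite automaton whose transitions (instructions) are labeled by commands; a program is a finite sequence of threads with ids $1,\dots,|P|$. Power automaton. A state consists of, for each thread $t$, a runtime state $(F,C,L)$ ($F$ the sequence of fetched instructions, $C$ the set of committed indices, $L$ mapping each index to $\bot$ or to the store read by the load there: an initial store $\mathrm{init}_a$ of value $0$ to $a$, or a pair $(t',i')$), and a storage state $(co,prop)$ ($co$ assigns rational coherence keys to committed stores, initial stores have key $0$; $prop(t,a)$ is the last store to $a$ propagated to $t$, initially $\mathrm{init}_a$); the initial state has nothing fetched. Register values for the $i$-th instruction of thread $t$ come from the latest earlier fetched assignment or load to the register ($0$ if none; a load gives $\bot$ if unsatisfied, $0$ if it read an initial store, else the value of the store read). Address/data dependencies are earlier instructions an address/value depends on via registers; control dependencies are earlier assumes. Transitions: (fetch) append an instruction of $T_t$ continuing from the last fetched one's target state, event $(\mathrm{fetch},t,\text{instr})$; (load from memory) load $i$ with $L[i]=\bot$ and address $a\ne\bot$: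 $L[i]:=prop(t,a)$, event $(\mathrm{load},t,i,a)$; (early read) same event, if the greatest $i'<i$ that is a store with address in $\{a,\bot\}$ has address $a$, known value and is uncommitted: $L[i]:=(t,i')$; (commit) uncommitted $i$ with committed address/data/control dependencies, address and value $\ne\bot$, all earlier instructions with the same or unknown address committed, $L[i]\ne\bot$ for loads, value $\ne0$ for assumes: event $(\mathrm{commit},t,i)$; for a store additionally a fresh key $k$ is set as $co(t,i)$, event $(\mathrm{commit},t,i,k,a)$, immediately followed by propagation to $t$; (propagate) committed store $(t',i')$ to $a$ with $co(prop(t,a))<co(t',i')$: $prop(t,a):=(t',i')$, event $(\mathrm{prop},t,t',i',a)$. Final states: all fetched instructions committed; for loads $i'<i$ of a thread to the same address, $co(L[i'])\le co(L[i])$; for a store $i'$ and later load $i$ of a thread to the same address, $co(t,i')\le co(L[i])$. *)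

(* Defs.v *)
From HB Require Import structures.
From mathcomp Require Import all_boot all_order all_algebra.
Set Implicit Arguments. Unset Strict Implicit. Unset Printing Implicit Defensive.
Import Order.TTheory GRing.Theory Num.Theory.
Local Open Scope ring_scope.

Section Power.
(* D : finite set of values/addresses, zero : the value 0 of D, Reg : registers *)
Variables (D : finType) (zero : D) (Reg : finType).

(* Expressions. A function over D u {bot} that returns bot iff some argument is
   bot is the same as a function on D-values extended strictly to bot. *)
Inductive expr : Type :=
| ECst of D
| EReg of Reg
| EApp of (seq D -> D) & seq expr.

Fixpoint evalE (rv : Reg -> option D) (e : expr) : option D :=
  match e with
  | ECst d => Some d
  | EReg r => rv r
  | EApp f args =>
      let fix evs (l : seq expr) : option (seq D) :=
        match l with
        | [::] => Some [::]
        | e :: l' => match evalE rv e, evs l' with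
                     | Some v, Some vs => Some (v :: vs)
                     | _, _ => None end
        end in
      omap f (evs args)
  end.

Fixpoint regsE (e : expr) : seq Reg :=
  match e with
  | ECst _ => [::]
  | EReg r => [:: r]
  | EApp _ args =>
      let fix rs (l : seq expr) : seq Reg :=
        match l with [::] => [::] | e :: l' => regsE e ++ rs l' end in
      rs args
  end.

(* Commands: r <- mem[e], mem[e] <- e', r <- e, assume(e) *)
Inductive cmd : Type :=
| CLoad of Reg & expr
| CStore of expr & expr
| CAssign of Reg & expr
| CAssume of expr.

Record instr : Type := Instr { isrc : nat; icmd : cmd; itgt : nat }.
Record thread : Type := Thread { tinit : nat; ttrans : seq instr }.
Definition program := seq thread.

(* stores: initial store init_a, or the store at index i of thread t *)
Inductive sid : Type := SInit of D | SSt of nat & nat.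

Inductive event : Type :=
| EvFetch of nat & instr
| EvLoad of nat & nat & D
| EvCommit of nat & nat
| EvCommitSt of nat & nat & rat & D      (* (commit, t, i, k, a) *)
| EvProp of nat & nat & nat & D.         (* (prop, t, t', i', a) *)

(* runtime state (F, C, L) of a thread; indices are 0-based *)
Record tstate : Type := TS { tF : seq instr; tC : nat -> bool; tL : nat -> option sid }.
Record state : Type := PSt {
  thr : nat -> tstate;
  co : nat -> nat -> option rat;   (* coherence key of committed store (t,i) *)
  prop : nat -> D -> sid }.

Definition init_state : state :=
  {| thr := fun _ => TS [::] (fun _ => false) (fun _ => None);
     co := fun _ _ => None;
     prop := fun _ a => SInit a |}.

Definition key (s : state) (x : sid) : option rat :=
  match x with SInit _ => Some 0 | SSt t i => co s t i end.
Definition okey (s : state) (o : option sid) : option rat := obind (key s) o.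
Definition klt (x y : option rat) : Prop :=
  match x, y with Some a, Some b => a < b | _, _ => False end.
Definition kle (x y : option rat) : Prop :=
  match x, y with Some a, Some b => a <= b | _, _ => False end.

Definition writes (r : Reg) (c : cmd) : bool :=
  match c with CLoad r' _ | CAssign r' _ => r' == r | _ => false end.
Definition is_mem (c : cmd) : bool :=
  match c with CLoad _ _ | CStore _ _ => true | _ => false end.
Definition is_load (c : cmd) : bool := if c is CLoad _ _ then true else false.
Definition is_store (c : cmd) : bool := if c is CStore _ _ then true else false.
Definition is_assume (c : cmd) : bool := if c is CAssume _ then true else false.

Definition cmd_at (s : state) (t i : nat) : option cmd :=
  omap icmd (onth (tF (thr s t)) i).

Definition last_before (s : state) (t i : nat) (p : cmd -> bool) : option nat :=
  ohead (rev [seq j <- iota 0 i | if cmd_at s t j is Some c then p c else false]).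

Fixpoint regval (n : nat) (s : state) (t i : nat) (r : Reg) {struct n} : option D :=
  match n with
  | 0 => None
  | n'.+1 =>
    match last_before s t i (writes r) with
    | None => Some zero
    | Some j =>
      match cmd_at s t j with
      | Some (CAssign _ e) => evalE (regval n' s t j) e
      | Some (CLoad _ _) =>
          match tL (thr s t) j with
          | None => None
          | Some (SInit _) => Some zero
          | Some (SSt t' i') =>
              match cmd_at s t' i' with
              | Some (CStore _ e') => evalE (regval n' s t' i') e'
              | _ => None end
          end
      | _ => None
      end
    end
  end.

Variable P : program.

Definition thread_of (t : nat) : thread := nth (Thread 0 [::]) P t.-1.
Definition valid_tid (t : nat) : bool := (0 < t <= size P)%N.

(* enough fuel: one more than the total number of fetched instructions *)
Definition fuel (s : state) : nat :=
  (sumn [seq size (tF (thr s t)) | t <- iota 1 (size P)]).+1.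

Definition val (s : state) (t i : nat) (e : expr) : option D :=
  evalE (regval (fuel s) s t i) e.

Definition store_val (s : state) (x : sid) : option D :=
  match x with
  | SInit _ => Some zero
  | SSt t' i' => if cmd_at s t' i' is Some (CStore _ e') then val s t' i' e' else None
  end.

(* address of a load/store instruction (None = bot or not a memory instruction) *)
Definition addr (s : state) (t i : nat) : option D :=
  match cmd_at s t i with
  | Some (CLoad _ e) | Some (CStore e _) => val s t i e
  | _ => None end.

Definition ivalue (s : state) (t i : nat) : option D :=
  match cmd_at s t i with
  | Some (CLoad _ _) => if tL (thr s t) i is Some x then store_val s x else None
  | Some (CStore _ e) | Some (CAssign _ e) | Some (CAssume e) => val s t i e
  | None => None end.

Definition addr_regs (c : cmd) : seq Reg :=
  match c with CLoad _ e | CStore e _ => regsE e | _ => [::] end.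
Definition data_regs (c : cmd) : seq Reg :=
  match c with CStore _ e | CAssign _ e | CAssume e => regsE e | _ => [::] end.

Definition deps_committed (s : state) (t i : nat) (c : cmd) : Prop :=
  (forall r j, r \in addr_regs c ++ data_regs c ->
     last_before s t i (writes r) = Some j -> tC (thr s t) j) /\
  (forall j c', (j < i)%N -> cmd_at s t j = Some c' -> is_assume c' -> tC (thr s t) j).

Definition can_commit (s : state) (t i : nat) (c : cmd) : Prop :=
  cmd_at s t i = Some c /\ ~~ tC (thr s t) i /\ deps_committed s t i c /\
  (is_mem c -> addr s t i <> None) /\ ivalue s t i <> None /\
  (is_mem c -> forall j c', (j < i)%N -> cmd_at s t j = Some c' -> is_mem c' ->
      addr s t j = addr s t i \/ addr s t j = None -> tC (thr s t) j) /\
  (is_load c -> tL (thr s t) i <> None) /\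
  (is_assume c -> ivalue s t i <> Some zero).

Definition upd_thr (s : state) (t : nat) (f : tstate -> tstate) : state :=
  {| thr := fun t' => if t' == t then f (thr s t) else thr s t';
     co := co s; prop := prop s |}.

Definition set_L (s : state) (t i : nat) (x : sid) : state :=
  upd_thr s t (fun ts => TS (tF ts) (tC ts)
                            (fun j => if j == i then Some x else tL ts j)).
Definition set_C (s : state) (t i : nat) : state :=
  upd_thr s t (fun ts => TS (tF ts) (fun j => if j == i then true else tC ts j) (tL ts)).
Definition set_prop (s : state) (t : nat) (a : D) (x : sid) : state :=
  {| thr := thr s; co := co s;
     prop := fun t' a' => if (t' == t) && (a' == a) then x else prop s t' a' |}.
Definition set_co (s : state) (t i : nat) (k : rat) : state :=
  {| thr := thr s; prop := prop s;
     co := fun t' i' => if (t' == t) && (i' == i) then Some k else co s t' i' |}.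

Definition cur_ctrl (s : state) (t : nat) : nat :=
  match rev (tF (thr s t)) with
  | [::] => tinit (thread_of t)
  | ins :: _ => itgt ins end.

Inductive step : state -> event -> state -> Prop :=
| StFetch s t ins :
    valid_tid t -> (exists n, onth (ttrans (thread_of t)) n = Some ins) -> isrc ins = cur_ctrl s t ->
    step s (EvFetch t ins)
      (upd_thr s t (fun ts => TS (rcons (tF ts) ins) (tC ts) (tL ts)))
| StLoadMem s t i a c :
    cmd_at s t i = Some c -> is_load c -> tL (thr s t) i = None -> addr s t i = Some a ->
    step s (EvLoad t i a) (set_L s t i (prop s t a))
| StEarlyRead s t i a c j c' :
    cmd_at s t i = Some c -> is_load c -> tL (thr s t) i = None -> addr s t i = Some a ->
    (j < i)%N -> cmd_at s t j = Some c' -> is_store c' -> addr s t j = Some a ->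
    ivalue s t j <> None -> ~~ tC (thr s t) j ->
    (forall j' c'', (j < j' < i)%N -> cmd_at s t j' = Some c'' -> is_store c'' ->
       addr s t j' <> Some a /\ addr s t j' <> None) ->
    step s (EvLoad t i a) (set_L s t i (SSt t j))
| StCommit s t i c :
    can_commit s t i c -> ~~ is_store c ->
    step s (EvCommit t i) (set_C s t i)
| StCommitStore s t i c k a :
    can_commit s t i c -> is_store c -> addr s t i = Some a ->
    (* fresh key: not the key 0 of initial stores, not used by a committed store *)
    k != 0 -> (forall t' i', co s t' i' <> Some k) ->
    (* immediately followed by propagation to t *)
    klt (key s (prop s t a)) (Some k) ->
    step s (EvCommitSt t i k a)
      (set_prop (set_co (set_C s t i) t i k) t a (SSt t i))
| StProp s t t' i' a c :
    valid_tid t -> cmd_at s t' i' = Some c -> is_store c -> tC (thr s t') i' ->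
    addr s t' i' = Some a -> klt (key s (prop s t a)) (co s t' i') ->
    step s (EvProp t t' i' a) (set_prop s t a (SSt t' i')).

Inductive reach : state -> seq event -> state -> Prop :=
| Reach0 s : reach s [::] s
| ReachS s e s' sg s'' : step s e s' -> reach s' sg s'' -> reach s (e :: sg) s''.

Definition final (s : state) : Prop :=
  forall t,
  [/\ (forall i, (i < size (tF (thr s t)))%N -> tC (thr s t) i),
      (forall i' i c' c a, (i' < i)%N -> cmd_at s t i' = Some c' -> is_load c' ->
          cmd_at s t i = Some c -> is_load c -> addr s t i' = Some a -> addr s t i = Some a ->
          kle (okey s (tL (thr s t) i')) (okey s (tL (thr s t) i))) &
      (forall i' i c' c a, (i' < i)%N -> cmd_at s t i' = Some c' -> is_store c' ->
          cmd_at s t i = Some c -> is_load c -> addr s t i' = Some a -> addr s t i = Some a ->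
          kle (co s t i') (okey s (tL (thr s t) i)))].

End Power.

(* Main.v *)
Require Import Defs.
From mathcomp Require Import all_boot all_order all_algebra.
Set Implicit Arguments. Unset Strict Implicit. Unset Printing Implicit Defensive.
Import Order.TTheory GRing.Theory Num.Theory.

Section Proofs.
Variables (D : finType) (zero : D) (Reg : finType) (P : program D Reg).
Notation state := (state D Reg).

Definition expr_ind2 (Q : expr D Reg -> Prop) (HC : forall d, Q (ECst Reg d))
  (HR : forall r, Q (EReg D r))
  (HA : forall h args, foldr (fun e acc => Q e /\ acc) True args -> Q (EApp h args)) :
  forall e, Q e :=
  fix F e := match e with
  | ECst d => HC d
  | EReg r => HR r
  | EApp h args => HA h args
      ((fix G (l : seq (expr D Reg)) : foldr (fun e acc => Q e /\ acc) True l :=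
          match l with [::] => I | e :: l' => conj (F e) (G l') end) args)
  end.

Lemma evalE_mono (f g : Reg -> option D) :
  (forall r v, f r = Some v -> g r = Some v) ->
  forall e v, evalE f e = Some v -> evalE g e = Some v.
Proof.
move=> fg; elim/expr_ind2 => [d|r|h args] //=; first exact: fg.
move=> H v.
suff K : forall vs, (fix evs (l : seq (expr D Reg)) : option (seq D) :=
        match l with
        | [::] => Some [::]
        | e :: l' => match evalE f e, evs l' with
                     | Some v, Some vs => Some (v :: vs)
                     | _, _ => None end
        end) args = Some vs ->
   (fix evs (l : seq (expr D Reg)) : option (seq D) :=
        match l with
        | [::] => Some [::]
        | e :: l' => match evalE g e, evs l' with
                     | Some v, Some vs => Some (v :: vs)
                     | _, _ => None end
        end) args = Some vs.
  by case E: (_ args) => [vs|] //= [<-]; rewrite (K _ E).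
elim: args H => [|e l IHl] //= [He Hl] vs.
case E1: (evalE f e) => [v1|] //; case E2: (_ l) => [vs2|] // [<-].
by rewrite (He _ E1) (IHl Hl _ E2).
Qed.

Definition ext (s s' : state) : Prop :=
  [/\ forall t i c, cmd_at s t i = Some c -> cmd_at s' t i = Some c,
      forall t, (size (tF (thr s t)) <= size (tF (thr s' t)))%N,
      forall t j x, tL (thr s t) j = Some x -> tL (thr s' t) j = Some x,
      forall t j, tC (thr s t) j -> tC (thr s' t) j &
      forall t i k, co s t i = Some k -> co s' t i = Some k].

Lemma ext_refl s : ext s s.
Proof. by split. Qed.

Lemma ext_trans s1 s2 s3 : ext s1 s2 -> ext s2 s3 -> ext s1 s3.
Proof.
case=> a b c d e [a' b' c' d' e']; split; auto.
by move=> t; apply: leq_trans (b t) (b' t).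
Qed.

Lemma cmd_at_size (s : state) t j : (j < size (tF (thr s t)))%N -> exists c, cmd_at s t j = Some c.
Proof.
rewrite /cmd_at -onthTE; case: onth => //= x _; by exists (icmd x).
Qed.

Lemma cmd_at_size' (s : state) t j c : cmd_at s t j = Some c -> (j < size (tF (thr s t)))%N.
Proof. by rewrite /cmd_at -onthTE; case: onth. Qed.

Lemma last_before_ext s s' t i p : ext s s' -> (i <= size (tF (thr s t)))%N ->
  last_before s t i p = last_before s' t i p.
Proof.
case=> h _ _ _ _ hi; rewrite /last_before; congr (ohead (rev _)).
apply: eq_in_filter => j; rewrite mem_iota /= => ji.
have [c hc] := cmd_at_size (leq_trans ji hi).
by rewrite hc (h _ _ _ hc).
Qed.

Lemma ohead_mem (T : eqType) (l : seq T) x : ohead l = Some x -> x \in l.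
Proof. by case: l => //= y l [->]; rewrite mem_head. Qed.

Lemma last_before_lt (s : state) t i p j : last_before s t i p = Some j -> (j < i)%N.
Proof.
by move/ohead_mem; rewrite mem_rev mem_filter mem_iota => /andP[_ /andP[_]].
Qed.

Lemma regval_mono n m s s' t i r v : ext s s' -> (n <= m)%N ->
  (i <= size (tF (thr s t)))%N ->
  regval zero n s t i r = Some v -> regval zero m s' t i r = Some v.
Proof.
move=> E; elim: n m t i r v => [|n IH] [|m] //= t i r v nm hi.
rewrite -(@last_before_ext s s' t i (writes r) E hi).
case LB: last_before => [j|] //.
have ji := last_before_lt LB.
have [c hc] := cmd_at_size (leq_trans ji hi).
have E' := E; case: E' => h1 _ h3 _ _.
rewrite hc (h1 _ _ _ hc).
case: c hc => [r' e|e e'|r' e|e] // hc.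
- case L: (tL _ j) => [x|] //; rewrite (h3 _ _ _ L).
  case: x L => [a|t' i'] // L.
  case C: (cmd_at s t' i') => [c'|] //; rewrite (h1 _ _ _ C).
  case: c' C => // e1 e2 C.
  apply: evalE_mono => r0 v0; apply: IH => //.
  exact: ltnW (cmd_at_size' C).
- apply: evalE_mono => r0 v0; apply: IH => //.
  exact: ltnW (leq_trans ji hi).
Qed.

Lemma fuel_mono s s' : ext s s' -> (fuel P s <= fuel P s')%N.
Proof.
case=> _ h _ _ _; rewrite /fuel ltnS.
elim: (iota 1 (size P)) => //= t l IH; exact: leq_add.
Qed.

Lemma val_mono s s' t i e v : ext s s' -> (i <= size (tF (thr s t)))%N ->
  Defs.val zero P s t i e = Some v -> Defs.val zero P s' t i e = Some v.
Proof.
move=> E hi; rewrite /val; apply: evalE_mono => r0 v0.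
by apply: regval_mono => //; apply: fuel_mono.
Qed.

Lemma addr_mono s s' t i a : ext s s' -> addr zero P s t i = Some a -> addr zero P s' t i = Some a.
Proof.
move=> E; have E' := E; case: E' => h1 _ _ _ _; rewrite /addr.
case C: (cmd_at s t i) => [c|] //; rewrite (h1 _ _ _ C).
have hi := ltnW (cmd_at_size' C).
by case: c C => // [r e|e e'] _; apply: val_mono.
Qed.

Lemma key_ext s s' x k : ext s s' -> key s x = Some k -> key s' x = Some k.
Proof. by case=> _ _ _ _ h; case: x => //= t i; apply: h. Qed.

Definition inv (s : state) : Prop :=
  (forall t i k, co s t i = Some k -> tC (thr s t) i) /\
  (forall t a, key s (prop s t a) <> None).

Lemma inv_init : inv (init_state D Reg).
Proof. by split. Qed.

Lemma step_ext s e s' : step zero P s e s' -> inv s -> ext s s'.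
Proof.
move=> st; case: st.
- move=> s0 t ins _ _ _ _; split; rewrite /cmd_at /= => t'; try (case: eqP => // ->); try by intros; auto.
  + move=> i c; rewrite -cats1 onth_cat; case: ifP => //.
    by rewrite -onthTE; case: onth.
  + by rewrite size_rcons.
- move=> s0 t i a c _ _ hN _ _; split; rewrite /cmd_at /= => t'; try (case: eqP => // ->); try by intros; auto.
  by move=> j x /=; case: eqP => // -> ; rewrite hN.
- move=> s0 t i a c j c' _ _ hN _ _ _ _ _ _ _ _ _; split; rewrite /cmd_at /= => t'; try (case: eqP => // ->); try by intros; auto.
  by move=> j' x /=; case: eqP => // -> ; rewrite hN.
- move=> s0 t i c _ _ _; split; rewrite /cmd_at /= => t'; try (case: eqP => // ->); try by intros; auto.
  by move=> j /=; case: eqP.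
- move=> s0 t i c k a [_ [hC _]] _ _ _ _ _ [I1 _]; split; rewrite /cmd_at /= => t'; try (case: eqP => // ->); try by intros; auto.
  + by move=> j /=; case: eqP.
  + move=> i' k' /=; case: eqP => // ->.
    by move/I1; rewrite (negbTE hC).
- by move=> s0 t t' i' a c *; split.
Qed.


Lemma step_inv s e s' : step zero P s e s' -> inv s -> inv s'.
Proof.
move=> st I; have E := step_ext st I; case: I => I1 I2.
have G1 : (forall t i k, co s' t i = Some k -> co s t i = Some k) ->
          forall t i k, co s' t i = Some k -> tC (thr s' t) i.
  by move=> H t i k /H /I1; case: E => _ _ _ h _; apply: h.
have G2 : (forall t a, prop s' t a = prop s t a) -> forall t a, key s' (prop s' t a) <> None.
  move=> H t a; rewrite H; move: (I2 t a); case K: key => [v|] // _.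
  by rewrite (key_ext E K).
move: I1 I2; case: st E G1 G2 => {s e s'}.
- by move=> s0 t ins _ _ _ _ G1 G2 _ _; split; [apply: G1|apply: G2].
- by move=> s0 t i a c _ _ _ _ _ G1 G2 _ _; split; [apply: G1|apply: G2].
- by move=> s0 t i a c j c' _ _ _ _ _ _ _ _ _ _ _ _ G1 G2 _ _; split; [apply: G1|apply: G2].
- by move=> s0 t i c _ _ _ G1 G2 _ _; split; [apply: G1|apply: G2].
- move=> s0 t i c k a _ _ _ _ _ kl E _ _ I1 I2; split.
  + move=> t' i' k' /=; case: (t' =P t) => [->|ne] /=.
      by case: eqP => // _ /I1.
    by move/I1.
  + move=> t' a' /=; case: ((t' == t) && (a' == a)) => /=; first by rewrite !eqxx.
    move: (I2 t' a'); case K: key => [v|] // _.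
    case: E => _ _ _ _ h5; case: (prop s0 t' a') K => //= t2 i2 K.
    by case: ifP => // _; rewrite K.
- move=> s0 t t' i' a c _ _ _ _ _ kl E _ _ I1 I2; split.
  + by move=> ? ? ? /= /I1.
  + move=> t2 a2 /=; case: ((t2 == t) && (a2 == a)) => /=.
      by move: kl; case: key => [?|]; case: co.
    exact: I2.
Qed.


Lemma kle_klt (x y : option rat) (z : rat) : kle (Some z) x -> klt x y -> kle (Some z) y.
Proof.
case: x => // x; case: y => // y /= h1 h2.
exact: (le_trans h1 (ltW h2)).
Qed.

Lemma kle_klt' (x : option rat) (z y : rat) : kle (Some z) x -> klt x (Some y) -> (z < y)%R.
Proof. by case: x => // x /= h1 h2; exact: (le_lt_trans h1 h2). Qed.

Lemma pkm s e s' t a z : step zero P s e s' -> inv s ->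
  kle (Some z) (key s (prop s t a)) -> kle (Some z) (key s' (prop s' t a)).
Proof.
move=> st I; have E := step_ext st I.
have G : prop s' t a = prop s t a -> kle (Some z) (key s (prop s t a)) ->
          kle (Some z) (key s' (prop s' t a)).
  move=> ->; case K: key => [v|] // h; by rewrite (key_ext E K).
case: st E G => {s e s' I}.
- by move=> *; auto.
- by move=> *; auto.
- by move=> *; auto.
- by move=> *; auto.
- move=> s0 t0 i c k a0 _ _ _ _ _ kl E G.
  have [/andP[/eqP e1 /eqP e2]|ne] := boolP ((t == t0) && (a == a0)).
    subst; move=> h; apply: (kle_klt h); by cbn; rewrite ?eqnE ?eqxx /= ?eqnE ?eqxx.
  by apply: G; rewrite /= (negbTE ne).
- move=> s0 t0 t' i' a0 c _ _ _ _ _ kl E G.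
  have [/andP[/eqP e1 /eqP e2]|ne] := boolP ((t == t0) && (a == a0)).
    subst; move=> h; apply: (kle_klt h); by cbn; rewrite ?eqnE ?eqxx /= ?eqnE ?eqxx.
  by apply: G; rewrite /= (negbTE ne).
Qed.


Lemma commit_track s e s' t j c' a z : step zero P s e s' -> inv s ->
  cmd_at s t j = Some c' -> is_store c' -> addr zero P s t j = Some a ->
  ~~ tC (thr s t) j -> kle (Some z) (key s (prop s t a)) ->
  (~~ tC (thr s' t) j /\ kle (Some z) (key s' (prop s' t a))) \/
  exists k, co s' t j = Some k /\ (z < k)%R.
Proof.
move=> st I hc hs ha hn hk.
case hC: (tC (thr s' t) j); last by left; split; [|exact: pkm st I hk].
right; move: hC hc hs ha hn hk; case: st => {s e s' I}.
- move=> s0 t0 ins _ _ _ /=; case: eqP => [->|_] /= -> //.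
- move=> s0 t0 i a0 c _ _ _ _ /=; case: eqP => [->|_] /= -> //.
- move=> s0 t0 i a0 c j0 c0 _ _ _ _ _ _ _ _ _ _ _ /=; case: eqP => [->|_] /= -> //.
- move=> s0 t0 i c [hc0 _] hns /=; case: eqP => [->|_] /=; last by move=> ->.
  case: eqP => [->|_] /=; last by move=> ->.
  by move=> _; rewrite hc0 => -[<-]; rewrite (negbTE hns).
- move=> s0 t0 i c k a0 [hc0 _] hs0 ha0 _ _ kl /=; case: eqP => [->|_] /=; last by move=> ->.
  case: eqP => [->|_] /=; last by move=> ->.
  move=> _ _ _; rewrite ha0 => -[<-] _ hk.
  exists k; split; first by cbn; rewrite ?eqnE ?eqxx.
  exact: kle_klt' hk kl.
- by move=> s0 t0 t' i' a0 c _ _ _ _ _ _ /= ->.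
Qed.


Lemma bad_run s sg q : reach zero P s sg q -> inv s -> final zero P q ->
  forall t i j a x0 z c c',
  tL (thr s t) i = Some x0 -> key s x0 = Some z -> cmd_at s t i = Some c -> is_load c ->
  addr zero P s t i = Some a -> (j < i)%N -> cmd_at s t j = Some c' -> is_store c' ->
  addr zero P s t j = Some a ->
  ((~~ tC (thr s t) j /\ kle (Some z) (key s (prop s t a))) \/
    exists k, co s t j = Some k /\ (z < k)%R) -> False.
Proof.
elim => {s sg q}.
- move=> s _ F t i j a x0 z c c' hL hK hc hl ha ji hc' hs ha'.
  have [h1 _ h3] := F t.
  case=> [[hn _]|[k [hk hz]]].
    by move: hn; rewrite h1 // (cmd_at_size' hc').
  have := h3 j i c' c a ji hc' hs hc hl ha' ha.
  rewrite hk hL /= hK /=.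
  by rewrite leNgt hz.
- move=> s e s1 sg q st _ IH I F t i j a x0 z c c' hL hK hc hl ha ji hc' hs ha' H.
  have E := step_ext st I.
  have E' := E; case: E' => h1 _ h3 _ h5.
  apply: (IH (step_inv st I) F t i j a x0 z c c'); auto.
  + exact: key_ext E hK.
  + exact: addr_mono E ha.
  + exact: addr_mono E ha'.
  case: H => [[hn hk]|[k [hk hz]]].
    case: (commit_track st I hc' hs ha' hn hk) => [H|[k' [hk' hz']]]; first by left.
    by right; exists k'.
  by right; exists k; split => //; apply: h5.
Qed.


Definition bad (s s1 : state) : Prop :=
  exists t i a j c c', s1 = set_L s t i (prop s t a) /\ cmd_at s t i = Some c /\ is_load c /\
    addr zero P s t i = Some a /\ (j < i)%N /\ cmd_at s t j = Some c' /\ is_store c' /\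
    addr zero P s t j = Some a /\ ~~ tC (thr s t) j.

Lemma bad_final s e s1 sg q : step zero P s e s1 -> inv s -> bad s s1 ->
  reach zero P s1 sg q -> final zero P q -> False.
Proof.
move=> st I B rq F; move: B st rq => [t [i [a [j [c [c' B]]]]]].
case: B => -> [hc [hl [ha [ji [hc' [hs [ha' hn]]]]]]] st rq.
have E := step_ext st I.
have I' := step_inv st I.
have [z hz] : exists z, key s (prop s t a) = Some z.
  by case: I => _ /(_ t a); case: key => [z|] // _; exists z.
apply: (bad_run rq I' F (t := t) (i := i) (j := j) (a := a) (x0 := prop s t a) (z := z) (c := c) (c' := c')).
- by cbn; rewrite ?eqnE ?eqxx /= ?eqnE ?eqxx.
- exact: key_ext E hz.
- by case: E => h1 _ _ _ _; apply: h1.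
- exact: hl.
- exact: addr_mono E ha.
- exact: ji.
- by case: E => h1 _ _ _ _; apply: h1.
- exact: hs.
- exact: addr_mono E ha'.
left; split.
  by rewrite /= eqxx.
rewrite [prop _ t a]/= (key_ext E hz) /=; exact: lexx.
Qed.

Lemma step_det s e s1 s2 : step zero P s e s1 -> step zero P s e s2 ->
  s1 = s2 \/ bad s s1 \/ bad s s2.
Proof.
case => {s e s1}.
- by move=> s t ins _ _ _ st2; inversion st2; subst; left.
- move=> s t i a c hc hl hn ha st2; inversion st2; subst; first by left.
  right; left; exists t, i, a, j, c, c'; repeat split => //.
- move=> s t i a c j c' hc hl hn ha ji hc' hs ha' hv hnc hmax st2; inversion st2; subst.
    right; right; exists t, i, a, j, c, c'; repeat split => //.
  left; case: (ltngtP j j0) => [h|h|->] //.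
    by case: (hmax j0 c'0) => //; rewrite h.
  by case: (H14 j c') => //; rewrite h.
- by move=> s t i c _ _ st2; inversion st2; subst; left.
- by move=> s t i c k a _ _ _ _ _ _ st2; inversion st2; subst; left.
- by move=> s t t' i' a c _ _ _ _ _ _ st2; inversion st2; subst; left.
Qed.

Lemma det s sg q q' : inv s -> reach zero P s sg q -> final zero P q ->
  reach zero P s sg q' -> final zero P q' -> q = q'.
Proof.
move=> I r; elim: r I q' => {s sg q}.
  by move=> s _ q' _ r _; inversion r.
move=> s e s1 sg q st r IH I q' F r' F'.
inversion r'; subst.
case: (step_det st H2) => [E|[B|B]].
- subst; exact: IH (step_inv st I) _ F H4 F'.
- by case: (bad_final st I B r F).
- by case: (bad_final H2 I B H4 F').
Qed.

End Proofs.

Theorem lemma1 (D : finType) (zero : D) (Reg : finType) (P : program D Reg)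
  (sigma : seq (event D Reg)) (q q' : state D Reg) :
  reach zero P (init_state D Reg) sigma q -> final zero P q ->
  reach zero P (init_state D Reg) sigma q' -> final zero P q' ->
  q = q'.
Proof. move=> r F r' F'; exact: det (inv_init D Reg) r F r' F'. Qed.
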